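(* Let $X$ be a finite-dimensional simplicial complex such that for all vertices $x,y$ of $X$, $\Sigma_x\subseteq\Sigma_y$ implies $x=y$. Then the map $\Omega\colon\mathrm{Aut}(X)\to\mathrm{Aut}(\mathcal{N}(X))$, $\Omega(\varphi)=\varphi_*$, is injective.
   Context: For a vertex $x$ of $X$, $\Sigma_x$ is the collection of maximal simplices of $X$ containing $x$. $\mathcal{N}(X)$ is the nerve of the collection of maximal simplices of $X$ (vertices: maximal simplices of $X$; a finite set of them is a simplex iff their common intersection is non-empty). For $\varphi\in\mathrm{Aut}(X)$ (simplicial automorphisms), $\varphi_*$ is the simplicial automorphism of $\mathcal{N}(X)$ given on vertices by $\varphi_*(K)=\varphi(K)$. *)

(* Defs.v *)
From mathcomp Require Import all_boot.
From mathcomp Require Import boolp classical_sets cardinality.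
Set Implicit Arguments. Unset Strict Implicit. Unset Printing Implicit Defensive.
Local Open Scope classical_set_scope.

Record complex (V : Type) := Complex {
  simplex : set (set V);
  simplex_finite : forall s, simplex s -> finite_set s;
  simplex_nonempty : forall s, simplex s -> s !=set0;
  simplex_down : forall s t, simplex s -> t `<=` s -> t !=set0 -> simplex t;
  simplex_vertex : forall v : V, simplex [set v]
}.

Definition finite_dim V (X : complex V) : Prop :=
  exists n : nat, forall s, simplex X s -> exists f : 'I_n -> V, s `<=` range f.

Definition maximal V (X : complex V) (K : set V) : Prop :=
  simplex X K /\ forall L, simplex X L -> K `<=` L -> L = K.

Definition Sigma V (X : complex V) (x : V) : set (set V) :=
  [set K | maximal X K /\ K x].

Definition is_aut V (X : complex V) (phi : V -> V) : Prop :=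
  bijective phi /\ forall s, simplex X s <-> simplex X (phi @` s).

(* the nerve N(X): vertices are maximal simplices of X, a finite nonempty
   family of them is a simplex iff their common intersection is nonempty *)
Definition nerve_vertex V (X : complex V) := {K : set V | maximal X K}.

Definition star V (phi : V -> V) (K : set V) : set V := phi @` K.

(* Main.v *)
Require Import Defs.
From mathcomp Require Import all_boot.
From mathcomp Require Import boolp classical_sets cardinality.
Local Open Scope classical_set_scope.

Theorem proposition3p8 (V : Type) (X : complex V) :
  finite_dim X ->
  (forall x y : V, Sigma X x `<=` Sigma X y -> x = y) ->
  forall phi psi : V -> V, is_aut X phi -> is_aut X psi ->
  (forall K, maximal X K -> star phi K = star psi K) ->
  phi = psi.
Proof.
move=> _ HS phi psi [[g gK Kg] Hphi] _ Heq.
apply: funext => x; apply: HS => K' [[sK' mK'] K'x].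
pose K := g @` K'.
have imK : phi @` K = K'.
  apply/seteqP; split => y.
    by case=> _ [k k' <-] <-; rewrite Kg.
  by move=> y'; exists (g y); [exists y | rewrite Kg].
have sK : simplex X K by apply/Hphi; rewrite imK.
have mK : maximal X K.
  rewrite /maximal.
  split; first exact: sK.
  move=> L sL KL; apply/seteqP; split; last by move=> ? /KL.
  move=> l Ll.
  have sPL : simplex X (phi @` L) by exact: (proj1 (Hphi L) sL).
  have : phi @` L = K'.
    apply: mK' => // y K'y; rewrite -imK in K'y; case: K'y => k Kk <-.
    by exists k => //; apply: KL.
  move=> E; exists (phi l); first by rewrite -E; exists l.
  by rewrite gK.
split; first by split.
have : (phi @` K) (phi x) by exists x => //; exists (phi x) => //; rewrite gK.
rewrite imK => H1.
have := Heq K mK; rewrite /star imK => ->.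
exists x => //; exists (phi x) => //; exact: gK.
Qed.
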